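(* Let $(E,d)$ be a metric space with a Borel probability measure $\mu$, let $k\geq1$ and $\alpha_k:[0,\infty)\to[0,\infty)$. The following are equivalent: (1) For all Borel sets $A_1,\ldots,A_k\subset E$ with $(\mu(A_1),\ldots,\mu(A_k))\in\Delta_k$, the set $A=A_1\cup\cdots\cup A_k$ satisfies $\mu(A_r)\geq1-(1-\mu(A))\alpha_k(r)$ for all $0<r\leq\frac12\min_{i\neq j}d(A_i,A_j)$. (2) For all $1$-Lipschitz functions $f_1,\ldots,f_k:E\to\mathbb{R}$ such that the sets $A_i=\{f_i\leq0\}$ satisfy $(\mu(A_1),\ldots,\mu(A_k))\in\Delta_k$, the function $f^*=\min(f_1,\ldots,f_k)$ satisfies $\mu(f^*<r)\geq1-\mu(f^*>0)\,\alpha_k(r)$ for all $0<r\leq\frac12\min_{i\neq j}d(A_i,A_j)$.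
   Context: For $A,B\subset E$, $d(A,B)=\inf\{d(x,y):x\in A,y\in B\}$. For $A\subset E$ and $r>0$, $A_r=\{x\in E:\exists y\in A,\ d(x,y)<r\}$. $\Delta_k$ is the set of $(a_1,\ldots,a_k)\in[0,1]^k$ with $\sum_ja_j\leq1$ and $a_i+\sum_ja_j\geq1$ for every $i$. *)

(* Defs.v *)
From HB Require Import structures.
From mathcomp Require Import all_boot all_order all_algebra.
From mathcomp Require Import all_classical all_reals all_analysis.
Set Implicit Arguments. Unset Strict Implicit. Unset Printing Implicit Defensive.
Import Order.TTheory GRing.Theory Num.Theory.
Local Open Scope classical_set_scope.
Local Open Scope ring_scope.

Definition is_metric (R : realType) (E : Type) (dist : E -> E -> R) : Prop :=
  [/\ forall x y, 0 <= dist x y,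
      forall x y, dist x y = 0 <-> x = y,
      forall x y, dist x y = dist y x
    & forall x y z, dist x z <= dist x y + dist y z].

Definition metric_open (R : realType) (E : Type) (dist : E -> E -> R) :
  set (set E) :=
  [set U | forall x, U x -> exists2 e : R, 0 < e & [set y | dist x y < e] `<=` U].

Definition borel_space (R : realType) (E : pointedType) (dist : E -> E -> R) :=
  g_sigma_algebraType (metric_open dist).

(* d(A,B) = inf { d(x,y) : x in A, y in B }, valued in extended reals
   (inf of the empty set is +oo) *)
Definition set_dist (R : realType) (E : Type) (dist : E -> E -> R)
  (A B : set E) : \bar R :=
  ereal_inf [set (dist xy.1 xy.2)%:E | xy in A `*` B].

Definition enlarge (R : realType) (E : Type) (dist : E -> E -> R)
  (A : set E) (r : R) : set E :=
  [set x | exists2 y, A y & dist x y < r].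

Definition Delta (R : realType) (k : nat) (a : 'I_k -> R) : Prop :=
  [/\ forall i, 0 <= a i <= 1,
      \sum_(j < k) a j <= 1
    & forall i, 1 <= a i + \sum_(j < k) a j].

(* f^* = min(f_1,...,f_k), as an extended real (equal to +oo only if k = 0) *)
Definition fmin (R : realType) (E : Type) (k : nat) (f : 'I_k -> E -> R)
  (x : E) : \bar R :=
  \big[Order.min/+oo%E]_(i < k) (f i x)%:E.

Definition lipschitz1 (R : realType) (E : Type) (dist : E -> E -> R)
  (g : E -> R) : Prop :=
  forall x y, `|g x - g y| <= dist x y.

(* Main.v *)
Require Import Defs.
From HB Require Import structures.
From mathcomp Require Import all_boot all_order all_algebra.
From mathcomp Require Import all_classical all_reals all_analysis.
From mathcomp Require Import ring lra.
Import Order.TTheory GRing.Theory Num.Theory.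
Local Open Scope classical_set_scope.
Local Open Scope ring_scope.

Section Aux.
Variables (R : realType) (E : pointedType) (dist : E -> E -> R).
Hypothesis hdist : is_metric dist.

Lemma open_meas (U : set E) : metric_open dist U ->
  measurable (U : set (borel_space dist)).
Proof. by move=> hU; apply: sub_gen_smallest. Qed.

Lemma lip_gt_open g c : lipschitz1 dist g -> metric_open dist [set x | c < g x].
Proof.
move=> hg x /= hx; exists (g x - c); first by rewrite subr_gt0.
move=> y /= hy; have := hg x y; rewrite ler_norml => /andP[_ h].
have : g x - g y < g x - c by apply: le_lt_trans hy.
by rewrite ltrD2l ltrN2.
Qed.

Lemma lip_lt_open g c : lipschitz1 dist g -> metric_open dist [set x | g x < c].
Proof.
move=> hg x /= hx; exists (c - g x); first by rewrite subr_gt0.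
move=> y /= hy; have := hg x y; rewrite ler_norml => /andP[h _].
have : g y - g x < c - g x by apply: le_lt_trans hy; lra.
by rewrite ltrD2r.
Qed.

Lemma lip_le_meas g c : lipschitz1 dist g ->
  measurable ([set x | g x <= c] : set (borel_space dist)).
Proof.
move=> hg.
have -> : [set x | g x <= c] = ~` [set x | c < g x].
  apply/funext => x /=; apply/propext; rewrite leNgt.
  by split => [/negP|/negP].
by apply: measurableC; apply: open_meas; apply: lip_gt_open.
Qed.

Lemma enlarge_open X r : metric_open dist (enlarge dist X r).
Proof.
case: hdist => d0 dxx dsym dtri.
move=> x [y Xy hxy]; exists (r - dist x y); first by rewrite subr_gt0.
move=> z /= hz; exists y => //.
have := dtri z x y; rewrite (dsym z x); lra.
Qed.


Lemma fmin_gtP k (f : 'I_k -> E -> R) x c :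
  (c%:E < fmin f x)%E <-> forall i, c < f i x.
Proof.
rewrite /fmin; split.
  by move/bigmin_gtP => [_ h] i; have := h i isT; rewrite lte_fin.
by move=> h; apply/bigmin_gtP; split; [exact: ltey|move=> i _; rewrite lte_fin; exact: h].
Qed.

Lemma fmin_ltP k (f : 'I_k -> E -> R) x c :
  (fmin f x < c%:E)%E <-> exists i, f i x < c.
Proof.
rewrite /fmin; split.
  by move/bigmin_ltP => [//|[i _ h]]; exists i; rewrite -lte_fin.
by move=> [i h]; apply/bigmin_ltP; right; exists i => //; rewrite lte_fin.
Qed.

Definition Dm (A : set E) (r : R) (x : E) : R :=
  inf ([set r] `|` [set dist x y | y in A]).

Section DmS.
Variables (A : set E) (r : R).
Hypothesis r0 : 0 < r.

Let S x := [set r] `|` [set dist x y | y in A].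

Lemma S_ne x : S x !=set0.
Proof. by exists r; left. Qed.

Lemma S_lb x : lbound (S x) 0.
Proof.
case: hdist => d0 _ _ _.
by move=> s [->|[y _ <-]]; [exact: ltW|exact: d0].
Qed.

Lemma S_hlb x : has_lbound (S x).
Proof. by exists 0; apply: S_lb. Qed.

Lemma Dm_ge0 x : 0 <= Dm A r x.
Proof. by apply: lb_le_inf; [apply: S_ne|apply: S_lb]. Qed.

Lemma Dm_inf x s : S x s -> Dm A r x <= s.
Proof. by move=> hs; apply: (ge_inf (S_hlb x)). Qed.

Lemma Dm_le_r x : Dm A r x <= r.
Proof. by apply: Dm_inf; left. Qed.

Lemma Dm_A x : A x -> Dm A r x <= 0.
Proof.
case: hdist => _ dxx _ _ Ax.
by rewrite -((dxx x x).2 erefl); apply: Dm_inf; right; exists x.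
Qed.

Lemma Dm_ltP x e : e <= r ->
  (Dm A r x < e <-> exists2 y, A y & dist x y < e).
Proof.
move=> er; split.
  move=> /(inf_lt (S_ne x)) [s [->|[y Ay <-]] hs]; first by lra.
  by exists y.
move=> [y Ay h]; apply: le_lt_trans h; apply: Dm_inf; right; by exists y.
Qed.

Lemma Dm_lip1 x y : Dm A r x <= Dm A r y + dist x y.
Proof.
case: hdist => d0 dxx dsym dtri.
rewrite -lerBlDr; apply: lb_le_inf; first exact: S_ne.
move=> s [->|[z Az <-]].
  by have := Dm_le_r x; have := d0 x y; lra.
rewrite lerBlDr; apply: (le_trans (@Dm_inf x (dist x z) _)).
  by right; exists z.
by rewrite addrC; apply: dtri.
Qed.

Lemma Dm_lip : lipschitz1 dist (Dm A r).
Proof.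
case: hdist => d0 dxx dsym dtri.
move=> x y; rewrite ler_norml; apply/andP; split.
  by have := Dm_lip1 y x; rewrite dsym; lra.
by have := Dm_lip1 x y; lra.
Qed.

End DmS.

End Aux.

Section Main.
Variables (R : realType) (E : pointedType) (dist : E -> E -> R).
Hypothesis hdist : is_metric dist.
Variable mu : probability (borel_space dist) R.

Lemma mu_fin (X : set (borel_space dist)) : measurable X ->
  mu X = (fine (mu X))%:E /\ 0 <= fine (mu X) <= 1.
Proof.
move=> mX; have hf : mu X \is a fin_num by exact: fin_num_measure.
split; first by rewrite fineK.
apply/andP; split; first by apply: fine_ge0; apply: measure_ge0.
rewrite -lee_fin fineK //; exact: probability_le1.
Qed.

Lemma mu_le (X Y : set (borel_space dist)) : measurable X -> measurable Y ->
  X `<=` Y -> fine (mu X) <= fine (mu Y).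
Proof.
move=> mX mY XY; apply: fine_le; try exact: fin_num_measure.
by apply: le_measure => //; rewrite inE.
Qed.

Lemma sum_mu k (F : 'I_k -> set (borel_space dist)) :
  (forall i, measurable (F i)) ->
  (forall i j, i != j -> F i `&` F j = set0) ->
  \sum_(i < k) fine (mu (F i)) = fine (mu (\bigcup_(i in [set: 'I_k]) F i)).
Proof.
move=> mF dF.
rewrite measure_fin_bigcup //; first last.
- move=> i j _ _ [x [hi hj]]; apply/eqP; apply/negP => ij.
  by have := dF i j (introT negP ij); move/seteqP => [+ _] => /(_ x) /=; apply.
- exact: finite_finset.
rewrite (fsbigE (enum 'I_k)) //; last first.
- by move=> i _; rewrite mem_enum.
- exact: enum_uniq.
rewrite -sum_fine; last by move=> i _; exact: fin_num_measure.
rewrite big_enum_cond /=; apply: eq_bigl => i; by rewrite in_setT.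
Qed.

End Main.

Theorem proposition4p1 (R : realType) (E : pointedType) (dist : E -> E -> R)
  (hdist : is_metric dist)
  (mu : probability (borel_space dist) R)
  (k : nat) (hk : (0 < k)%N)
  (alpha : R -> R) (halpha : forall r, 0 <= r -> 0 <= alpha r) :
  (forall A : 'I_k -> set (borel_space dist),
     (forall i, measurable (A i)) ->
     Delta (fun i => fine (mu (A i))) ->
     forall r : R, 0 < r ->
       (forall i j, i != j -> ((2 * r)%:E <= set_dist dist (A i) (A j))%E) ->
       (1 - (1 - mu (\bigcup_(i in [set: 'I_k]) A i)) * (alpha r)%:E
          <= mu (enlarge dist (\bigcup_(i in [set: 'I_k]) A i) r))%E)
  <->
  (forall f : 'I_k -> E -> R,
     (forall i, lipschitz1 dist (f i)) ->
     Delta (fun i => fine (mu [set x | f i x <= 0])) ->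
     forall r : R, 0 < r ->
       (forall i j, i != j ->
          ((2 * r)%:E <= set_dist dist [set x | (f i x <= 0)%R]
                                       [set x | (f j x <= 0)%R])%E) ->
       (1 - mu [set x | (0 < fmin f x)%E] * (alpha r)%:E
          <= mu [set x | (fmin f x < r%:E)%E])%E).
Proof.
have [d0 dxx dsym dtri] := hdist.
have hM := @mu_fin R E dist mu.
split.
- move=> H1 f hf hD r r0 hsep.
  pose A i : set (borel_space dist) := [set x | f i x <= 0].
  have mA i : measurable (A i) by apply: lip_le_meas.
  have := H1 A mA hD r r0 hsep.
  set U := \bigcup_(i in [set: 'I_k]) A i.
  have mU : measurable U by apply: fin_bigcup_measurable => //; exact: finite_finset.
  have eq1 : [set x | (0 < fmin f x)%E] = ~` U.
    apply/funext => x; apply/propext; rewrite /U /=; split.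
      move=> /fmin_gtP h [i _] /=; have := h i; rewrite /A /=; lra.
    move=> h; apply/fmin_gtP => i; rewrite ltNge; apply/negP => hi.
    by apply: h; exists i.
  pose L : set (borel_space dist) := [set x | (fmin f x < r%:E)%E].
  have eqL : L = \bigcup_(i in [set: 'I_k]) [set x | f i x < r].
    apply/funext => x; apply/propext; rewrite /L /=; split.
      by move=> /fmin_ltP [i h]; exists i.
    by move=> [i _ h]; apply/fmin_ltP; exists i.
  have mL : measurable L.
    rewrite eqL; apply: fin_bigcup_measurable; first exact: finite_finset.
    by move=> i _; apply: open_meas; apply: lip_lt_open.
  have sub : enlarge dist U r `<=` L.
    move=> x [y [i _ Ay] hxy]; apply/fmin_ltP; exists i.
    have := hf i x y; rewrite ler_norml => /andP[_ h].
    move: Ay; rewrite /A /= => Ay; lra.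
  have mEn : measurable (enlarge dist U r : set (borel_space dist)).
    by apply: open_meas; apply: enlarge_open.
  rewrite eq1 probability_setC // => h.
  apply: le_trans h _.
  by apply: le_measure => //; rewrite inE.
- move=> H2 A mA hD r r0 hsep.
  pose f i := @Dm _ _ dist (A i) r.
  have hf i : lipschitz1 dist (f i) by apply: Dm_lip.
  pose C i : set (borel_space dist) := [set x | f i x <= 0].
  have mC i : measurable (C i) by apply: lip_le_meas.
  have AC i : A i `<=` C i by move=> x Ax; apply: Dm_A.
  have Capp i x e : C i x -> 0 < e -> e <= r -> exists2 y, A i y & dist x y < e.
    move=> Cx e0 er; apply/(@Dm_ltP _ _ dist hdist (A i) r r0 x e er).
    by apply: le_lt_trans Cx e0.
  have sepC i j : i != j -> ((2 * r)%:E <= set_dist dist (C i) (C j))%E.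
    move=> ij; apply/ereal_infP => z [[x y] [/= Cx Cy] <-]; rewrite lee_fin.
    rewrite leNgt; apply/negP => hxy.
    have dxy0 := d0 x y.
    pose e := (2 * r - dist x y) / 3.
    have e0 : 0 < e by rewrite /e; lra.
    have er : e <= r by rewrite /e; lra.
    have [a Aa ha] := Capp i x e Cx e0 er.
    have [b Ab hb] := Capp j y e Cy e0 er.
    have := hsep i j ij.
    move/ereal_infP => /(_ (dist a b)%:E) h.
    have : ((2 * r)%:E <= (dist a b)%:E)%E by apply: h; exists (a, b).
    rewrite lee_fin => hab.
    have := dtri a x b; have := dtri x y b; rewrite (dsym a x).
    rewrite /e in ha hb; lra.
  have disjC i j : i != j -> C i `&` C j = set0.
    move=> ij; apply/seteqP; split => // x [Cx Cy].
    have := sepC i j ij => /ereal_infP /(_ (dist x x)%:E) h.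
    have : ((2 * r)%:E <= (dist x x)%:E)%E by apply: h; exists (x, x).
    rewrite lee_fin ((dxx x x).2 erefl); lra.
  set UA := \bigcup_(i in [set: 'I_k]) A i.
  set UC := \bigcup_(i in [set: 'I_k]) C i.
  have mUA : measurable UA by apply: fin_bigcup_measurable => //; exact: finite_finset.
  have mUC : measurable UC by apply: fin_bigcup_measurable => //; exact: finite_finset.
  have hsC := @sum_mu _ _ dist mu k C mC disjC.
  have hDC : Delta (fun i => fine (mu (C i))).
    case: hD => hA1 hA2 hA3; split.
    - by move=> i; exact: (hM _ (mC i)).2.
    - by rewrite hsC; have /andP[] := (hM _ mUC).2.
    - move=> i; apply: le_trans (hA3 i) _; apply: lerD.
        by apply: mu_le => //; exact: AC.
      by apply: ler_sum => j _; apply: mu_le => //; exact: AC.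
  have := H2 f hf hDC r r0 sepC.
  have eq1 : [set x | (0 < fmin f x)%E] = ~` UC.
    apply/funext => x; apply/propext; rewrite /UC /=; split.
      move=> /fmin_gtP h [i _] /=; have := h i; rewrite /C /=; lra.
    move=> h; apply/fmin_gtP => i; rewrite ltNge; apply/negP => hi.
    by apply: h; exists i.
  have eq2 : [set x | (fmin f x < r%:E)%E] = enlarge dist UA r.
    apply/funext => x; apply/propext; rewrite /UA /=; split.
      move=> /fmin_ltP [i] /(@Dm_ltP _ _ dist hdist (A i) r r0 x r (lexx r)).
      by move=> [y Ay h]; exists y => //; exists i.
    move=> [y [i _ Ay] h]; apply/fmin_ltP; exists i.
    by apply/(@Dm_ltP _ _ dist hdist (A i) r r0 x r (lexx r)); exists y.
  have mEn : measurable (enlarge dist UA r : set (borel_space dist)).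
    by apply: open_meas; apply: enlarge_open.
  have hAC : fine (mu UA) <= fine (mu UC).
    apply: mu_le => // x [i _ Ax]; exists i => //; exact: AC.
  rewrite eq1 eq2 probability_setC //.
  have [-> _] := hM _ mUA; have [-> _] := hM _ mUC; have [-> _] := hM _ mEn.
  have ha := halpha r (ltW r0).
  have e1 : (1 : \bar R)%E = (1 : R)%:E by []. rewrite !e1.
  rewrite -!EFinB.
  rewrite !lee_fin => h.
  by apply: le_trans h; rewrite lerD2l lerN2; apply: ler_wpM2r => //; lra.
Qed.
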